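(* Let $\epsilon>0$, $\zeta>1$, and let $N_\epsilon=\{(x,y)\in\mathbb{R}^2: 0<x^2+y^2<\epsilon^2\}$ with the Lorentzian metric $ds^2=4\{(y^2-(\zeta-1)x^2)\,dx^2+(x^2-(\zeta-1)y^2)\,dy^2+2\zeta xy\,dx\,dy\}$, time-oriented so that the function $-x^2+y^2$ increases along future directed timelike curves. Then $(N_\epsilon,g)$ is not causally continuous.
   Context: This is the neighbourhood geometry of type $(1,1)$ (the ''trousers''): the Morse metric $g_{\mu\nu}=h_{\mu\nu}|df|_h^2-\zeta\,\partial_\mu f\,\partial_\nu f$ built from the flat Euclidean metric $h$ and $f=-x^2+y^2$ (plus a constant) on the punctured disc. Chronological relations are computed within $N_\epsilon$: $a\ll b$ iff there is a future directed $C^1$ timelike curve in $N_\epsilon$ from $a$ to $b$; $I^+(a)=\{b:a\ll b\}$, $I^-(a)=\{b:b\ll a\}$; for open $U$, $\downarrow U=\mathrm{Int}\{c:c\ll u\ \forall u\in U\}$, $\uparrow U=\mathrm{Int}\{c:u\ll c\ \forall u\in U\}$. The spacetime is causally continuous if $I^+(a)=\uparrow I^-(a)$ and $I^-(a)=\downarrow I^+(a)$ for all $a\in N_\epsilon$. *)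

(* Defs.v *)
From Stdlib Require Import Reals.
From Coquelicot Require Import Coquelicot.
Open Scope R_scope.

Definition pt := (R * R)%type.

Definition inN (eps : R) (p : pt) : Prop :=
  0 < fst p ^ 2 + snd p ^ 2 < eps ^ 2.

(* The metric ds^2 = 4{(y^2-(zeta-1)x^2)dx^2 + (x^2-(zeta-1)y^2)dy^2
   + 2 zeta x y dx dy}, evaluated on the pair of tangent vectors v, w at p. *)
Definition gmet (zeta : R) (p v w : pt) : R :=
  let x := fst p in let y := snd p in
  4 * ((y ^ 2 - (zeta - 1) * x ^ 2) * fst v * fst w
     + (x ^ 2 - (zeta - 1) * y ^ 2) * snd v * snd w
     + zeta * x * y * (fst v * snd w + snd v * fst w)).

Definition df (p v : pt) : R := - 2 * fst p * fst v + 2 * snd p * snd v.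

Definition fut_timelike (zeta : R) (p v : pt) : Prop :=
  gmet zeta p v v < 0 /\ 0 < df p v.

(* C^1 real function (a C^1 curve on [0,1] extends to a C^1 function on R). *)
Definition C1 (u : R -> R) : Prop :=
  forall t, ex_derive u t /\ continuous (Derive u) t.

Definition chron (eps zeta : R) (a b : pt) : Prop :=
  exists X Y : R -> R,
    C1 X /\ C1 Y /\
    (X 0, Y 0) = a /\ (X 1, Y 1) = b /\
    forall t, 0 <= t <= 1 ->
      inN eps (X t, Y t) /\
      fut_timelike zeta (X t, Y t) (Derive X t, Derive Y t).

Definition Ifut (eps zeta : R) (a : pt) : pt -> Prop := fun b => chron eps zeta a b.
Definition Ipast (eps zeta : R) (a : pt) : pt -> Prop := fun b => chron eps zeta b a.

Definition interior2 (S : pt -> Prop) : pt -> Prop :=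
  fun p => exists r, 0 < r /\
    forall q : pt, (fst q - fst p) ^ 2 + (snd q - snd p) ^ 2 < r ^ 2 -> S q.

Definition down (eps zeta : R) (U : pt -> Prop) : pt -> Prop :=
  interior2 (fun c => inN eps c /\ forall u, U u -> chron eps zeta c u).
Definition up (eps zeta : R) (U : pt -> Prop) : pt -> Prop :=
  interior2 (fun c => inN eps c /\ forall u, U u -> chron eps zeta u c).

Definition causally_continuous (eps zeta : R) : Prop :=
  forall a, inN eps a ->
    (forall b, Ifut eps zeta a b <-> up eps zeta (Ipast eps zeta a) b) /\
    (forall b, Ipast eps zeta a b <-> down eps zeta (Ifut eps zeta a) b).

(* Main.v *)
Require Import Defs.
From Stdlib Require Import Reals.
From Coquelicot Require Import Coquelicot.
Open Scope R_scope.
From Stdlib Require Import Lra Psatz Lia.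
Import Defs.

Lemma C1_cont f t : C1 f -> continuous f t.
Proof. intros H. apply (ex_derive_continuous (K:=R_AbsRing) (V:=R_NormedModule)). apply H. Qed.

Lemma C1_plus f g : C1 f -> C1 g -> C1 (fun t => f t + g t).
Proof.
  intros Hf Hg t. split.
  - apply (ex_derive_plus f g); [apply Hf|apply Hg].
  - apply continuous_ext with (f := fun t => Derive f t + Derive g t).
    + intros x. rewrite Derive_plus; [reflexivity|apply Hf|apply Hg].
    + apply (continuous_plus (Derive f) (Derive g)); [apply Hf|apply Hg].
Qed.

Lemma C1_opp f : C1 f -> C1 (fun t => - f t).
Proof.
  intros Hf t. split.
  - apply (ex_derive_opp f); apply Hf.
  - apply continuous_ext with (f := fun t => - Derive f t).
    + intros x. rewrite Derive_opp; reflexivity.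
    + apply (continuous_opp (Derive f)); apply Hf.
Qed.

Lemma C1_mult f g : C1 f -> C1 g -> C1 (fun t => f t * g t).
Proof.
  intros Hf Hg t. split.
  - apply (ex_derive_mult f g); [apply Hf|apply Hg].
  - apply continuous_ext with (f := fun t => Derive f t * g t + f t * Derive g t).
    + intros x. rewrite Derive_mult; [reflexivity|apply Hf|apply Hg].
    + apply (continuous_plus (fun t => Derive f t * g t) (fun t => f t * Derive g t)).
      apply (continuous_mult (Derive f) g). apply Hf. apply C1_cont, Hg.
      apply (continuous_mult f (Derive g)).
      apply C1_cont, Hf. apply Hg.
Qed.

Lemma C1_const c : C1 (fun _ => c).
Proof.
  intros t. split. apply ex_derive_const.
  apply continuous_ext with (f := fun _ => 0).
  intros x. rewrite Derive_const. reflexivity.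
  apply continuous_const.
Qed.

Lemma C1_id : C1 (fun t => t).
Proof.
  intros t. split. apply ex_derive_id.
  apply continuous_ext with (f := fun _ => 1).
  intros x. rewrite Derive_id. reflexivity.
  apply continuous_const.
Qed.

Lemma C1_inv f : C1 f -> (forall t, f t <> 0) -> C1 (fun t => / f t).
Proof.
  intros Hf Hn t. split.
  - apply (ex_derive_inv f); [apply Hf|apply Hn].
  - apply continuous_ext with (f := fun t => - Derive f t / f t ^ 2).
    + intros x. rewrite Derive_inv; [reflexivity|apply Hf|apply Hn].
    + unfold Rdiv. apply (continuous_mult (fun t => - Derive f t) (fun t => / f t ^ 2)).
      apply (continuous_opp (Derive f)); apply Hf.
      apply (continuous_Rinv_comp (fun t => f t ^ 2)).
      apply continuous_ext with (f := fun t => f t * (f t * 1)).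
      intros; simpl; ring.
      apply (continuous_mult f (fun t => f t * 1)). apply C1_cont, Hf.
      apply (continuous_mult f (fun _ => 1)). apply C1_cont, Hf. apply continuous_const.
      simpl. specialize (Hn t). intros H. apply Hn. nra.
Qed.

Lemma C1_sqrt f : C1 f -> (forall t, 0 < f t) -> C1 (fun t => sqrt (f t)).
Proof.
  intros Hf Hp t.
  assert (Hd : forall x, is_derive (fun t => sqrt (f t)) x (Derive f x / (2 * sqrt (f x)))).
  { intros x. apply is_derive_sqrt. apply Derive_correct, Hf. apply Hp. }
  split.
  - eexists. apply Hd.
  - apply continuous_ext with (f := fun x => Derive f x * / (2 * sqrt (f x))).
    + intros x. symmetry. apply is_derive_unique, Hd.
    + apply (continuous_mult (Derive f) (fun x => / (2 * sqrt (f x)))). apply Hf.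
      apply (continuous_Rinv_comp (fun x => 2 * sqrt (f x))).
      apply (continuous_mult (fun _ => 2) (fun x => sqrt (f x))). apply continuous_const.
      apply (continuous_sqrt_comp f). apply C1_cont, Hf.
      specialize (Hp t). intros H. apply sqrt_lt_R0 in Hp. simpl in H. lra.
Qed.

Lemma C1_pow f n : C1 f -> C1 (fun t => f t ^ n).
Proof.
  intros Hf. induction n.
  - simpl. apply C1_const.
  - simpl. apply C1_mult; assumption.
Qed.

Lemma C1_ext f g : C1 f -> (forall t, f t = g t) -> C1 g.
Proof.
  intros Hf E. assert (f = g) by (apply FunctionalExtensionality.functional_extensionality; exact E).
  subst; exact Hf.
Qed.

Lemma incr_deriv f f' a b : a < b ->
  (forall c, a <= c <= b -> is_derive f c (f' c)) ->
  (forall c, a <= c <= b -> 0 < f' c) -> f a < f b.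
Proof.
  intros Hab Hd Hp.
  destruct (MVT_cor2 f f' a b Hab) as [c [Hc1 Hc2]].
  { intros c Hc. apply is_derive_Reals. apply Hd. exact Hc. }
  assert (0 < f' c) by (apply Hp; lra).
  assert (0 < f' c * (b - a)) by (apply Rmult_lt_0_compat; lra). lra.
Qed.

Lemma C1_IVT f x y : C1 f -> x <= y -> f x * f y <= 0 -> exists z, x <= z <= y /\ f z = 0.
Proof.
  intros Hf Hxy Hs.
  assert (Hc : continuity f).
  { intros t. apply continuity_pt_filterlim. apply (C1_cont f t Hf). }
  destruct (IVT_cor f x y Hc Hxy Hs) as [z Hz]. exists z; exact Hz.
Qed.

Lemma gmet_eq zeta x y v1 v2 :
  gmet zeta (x,y) (v1,v2) (v1,v2) = (2*(x*v2+y*v1))^2 - (zeta-1)*(2*(x*v1-y*v2))^2.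
Proof. unfold gmet; simpl; ring. Qed.

Lemma df_eq x y v1 v2 : df (x,y) (v1,v2) = - (2*(x*v1-y*v2)).
Proof. unfold df; simpl; ring. Qed.

Lemma curve_incr zeta X Y (al be : R) :
  C1 X -> C1 Y ->
  (forall t, 0 <= t <= 1 -> fut_timelike zeta (X t, Y t) (Derive X t, Derive Y t)) ->
  (forall p q, q^2 < (zeta-1)*p^2 -> p < 0 -> 0 < al*p + be*q) ->
  forall t1 t2, 0 <= t1 -> t1 < t2 -> t2 <= 1 ->
  al*(X t1^2 - Y t1^2) + be*(2*X t1*Y t1) < al*(X t2^2 - Y t2^2) + be*(2*X t2*Y t2).
Proof.
  intros HX HY HT Hab t1 t2 H1 H12 H2.
  apply (incr_deriv (fun t => al*(X t^2 - Y t^2) + be*(2*X t*Y t))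
     (fun t => al*(2*(X t*Derive X t - Y t*Derive Y t)) + be*(2*(X t*Derive Y t + Y t*Derive X t)))).
  - exact H12.
  - intros c Hc. auto_derive. split. apply HX. split. apply HY. split. apply HX. split. apply HY. tauto.
    change (Derive (fun x : R => X x) c) with (Derive X c); change (Derive (fun x : R => Y x) c) with (Derive Y c); ring.
  - intros c Hc. destruct (HT c ltac:(lra)) as [G D].
    rewrite gmet_eq in G. rewrite df_eq in D. apply Hab; lra.
Qed.


Definition kk (zeta : R) := sqrt (zeta - 1).
Definition dd (zeta : R) := sqrt zeta - 1.
Definition sa (eps zeta : R) := eps / (2 * (kk zeta + dd zeta)).
Definition apt (eps zeta : R) : pt := (sa eps zeta * kk zeta, sa eps zeta * dd zeta).
Definition bpt (eps : R) : pt := (0, - (eps / 2)).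

Lemma consts zeta : 1 < zeta ->
  0 < kk zeta /\ kk zeta * kk zeta = zeta - 1 /\ 0 < dd zeta /\
  dd zeta * dd zeta + 2 * dd zeta = kk zeta * kk zeta.
Proof.
  intros Hz. unfold kk, dd.
  assert (H1 : 0 < sqrt (zeta - 1)) by (apply sqrt_lt_R0; lra).
  assert (H2 : sqrt (zeta - 1) * sqrt (zeta - 1) = zeta - 1) by (apply sqrt_sqrt; lra).
  assert (H3 : sqrt zeta * sqrt zeta = zeta) by (apply sqrt_sqrt; lra).
  assert (H4 : 1 < sqrt zeta).
  { rewrite <- sqrt_1. apply sqrt_lt_1_alt. lra. }
  repeat split; try lra.
Qed.

Lemma apt_in eps zeta : 0 < eps -> 1 < zeta -> inN eps (apt eps zeta).
Proof.
  intros He Hz. destruct (consts zeta Hz) as [Hk [Hkk [Hd Hdd]]].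
  unfold inN, apt, sa; simpl.
  set (k := kk zeta) in *. set (d := dd zeta) in *.
  assert (Hs : 0 < eps / (2 * (k + d))) by (apply Rdiv_lt_0_compat; lra).
  set (s := eps / (2 * (k + d))) in *.
  assert (Hse : s * (2 * (k + d)) = eps) by (unfold s; field; lra).
  assert (Hsk : 0 < s * k) by (apply Rmult_lt_0_compat; lra).
  assert (Hsd : 0 < s * d) by (apply Rmult_lt_0_compat; lra).
  assert (s * k + s * d < eps) by nra.
  split. nra. nra.
Qed.

Lemma L_apt eps zeta : 1 < zeta ->
  let a := apt eps zeta in
  2 * fst a * snd a - kk zeta * (fst a ^ 2 - snd a ^ 2) = 0.
Proof.
  intros Hz. destruct (consts zeta Hz) as [Hk [Hkk [Hd Hdd]]].
  unfold apt; simpl. set (k := kk zeta) in *. set (d := dd zeta) in *.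
  set (s := sa eps zeta). 
  assert (E : k * k = 2 * d + d * d) by lra.
  transitivity (s * s * k * (2 * d + d * d - k * k)); [ring|]. rewrite E; ring.
Qed.

Lemma not_fut eps zeta : 0 < eps -> 1 < zeta -> ~ chron eps zeta (apt eps zeta) (bpt eps).
Proof.
  intros He Hz [X [Y [HX [HY [H0 [H1 HT]]]]]].
  destruct (consts zeta Hz) as [Hk [Hkk [Hd Hdd]]].
  assert (HT' : forall t, 0 <= t <= 1 -> fut_timelike zeta (X t, Y t) (Derive X t, Derive Y t))
    by (intros t Ht; apply HT; exact Ht).
  pose proof (curve_incr zeta X Y (- kk zeta) 1 HX HY HT') as Hinc.
  assert (Hc : forall p q, q^2 < (zeta-1)*p^2 -> p < 0 -> 0 < - kk zeta * p + 1 * q).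
  { intros p q Hq Hp. rewrite <- Hkk in Hq.
    destruct (Rle_or_lt (- kk zeta * p + 1 * q) 0) as [Hn|]; [|assumption].
    exfalso. assert (Hkp : kk zeta * p < 0) by nra.
    assert (0 <= (kk zeta * p - q) * (- (kk zeta * p) - q)) by (apply Rmult_le_pos; lra).
    nra. }
  specialize (Hinc Hc).
  pose proof (L_apt eps zeta Hz) as HL. simpl in HL.
  injection H0 as HX0 HY0. injection H1 as HX1 HY1.
  assert (Hs : 0 < sa eps zeta).
  { unfold sa. apply Rdiv_lt_0_compat; lra. }
  destruct (C1_IVT Y 0 1 HY ltac:(lra)) as [z [Hz01 Hz0]].
  { rewrite HY0, HY1. unfold apt. simpl.
    assert (0 < sa eps zeta * dd zeta) by nra. nra. }
  assert (Hzp : 0 < z).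
  { destruct Hz01 as [Hz0' _]. destruct Hz0' as [|E]; [assumption|].
    subst z. rewrite HY0 in Hz0. unfold apt in Hz0; simpl in Hz0. nra. }
  specialize (Hinc 0 z ltac:(lra) Hzp ltac:(lra)).
  rewrite HX0, HY0, Hz0 in Hinc. unfold apt in *; simpl in *.
  assert (0 <= kk zeta * X z ^ 2) by (apply Rmult_le_pos; [lra| apply pow2_ge_0]).
  nra.
Qed.


Lemma cone_ok zeta k sg : 0 < k -> k * k = zeta - 1 -> (sg = 1 \/ sg = -1) ->
  forall p q, q^2 < (zeta-1)*p^2 -> p < 0 -> 0 < - k * p + sg * q.
Proof.
  intros Hk Hkk Hs p q Hq Hp. rewrite <- Hkk in Hq.
  destruct (Rle_or_lt (- k * p + sg * q) 0) as [Hn|]; [|assumption].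
  exfalso. assert (Hkp : k * p < 0) by nra.
  destruct Hs; subst sg.
  - assert (0 <= (k * p - q) * (- (k * p) - q)) by (apply Rmult_le_pos; lra). nra.
  - assert (0 <= (k * p + q) * (- (k * p) + q)) by (apply Rmult_le_pos; lra). nra.
Qed.

Lemma past_props eps zeta u : 0 < eps -> 1 < zeta -> chron eps zeta u (apt eps zeta) ->
  inN eps u /\ snd u < fst u /\
  2 * fst u * snd u - kk zeta * (fst u ^ 2 - snd u ^ 2) < 0 /\
  - 2 * fst u * snd u - kk zeta * (fst u ^ 2 - snd u ^ 2) < 0.
Proof.
  intros He Hz [X [Y [HX [HY [H0 [H1 HT]]]]]].
  destruct (consts zeta Hz) as [Hk [Hkk [Hd Hdd]]].
  assert (HT' : forall t, 0 <= t <= 1 -> fut_timelike zeta (X t, Y t) (Derive X t, Derive Y t))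
    by (intros t Ht; apply HT; exact Ht).
  assert (Hs : 0 < sa eps zeta) by (unfold sa; apply Rdiv_lt_0_compat; lra).
  pose proof (curve_incr zeta X Y (- kk zeta) 1 HX HY HT'
     (cone_ok zeta (kk zeta) 1 Hk Hkk (or_introl eq_refl)) 0 1 ltac:(lra) ltac:(lra) ltac:(lra)) as HL.
  pose proof (curve_incr zeta X Y (- kk zeta) (-1) HX HY HT'
     (cone_ok zeta (kk zeta) (-1) Hk Hkk (or_intror eq_refl)) 0 1 ltac:(lra) ltac:(lra) ltac:(lra)) as HM.
  assert (HP : forall p q, q^2 < (zeta-1)*p^2 -> p < 0 -> 0 < -1 * p + 0 * q) by (intros; lra).
  pose proof (curve_incr zeta X Y (-1) 0 HX HY HT' HP) as HPi.
  pose proof (HT 0 ltac:(lra)) as [HN0 _].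
  rewrite H0 in HN0.
  destruct u as [u1 u2]. injection H0 as HX0 HY0. injection H1 as HX1 HY1.
  rewrite HX0, HY0, HX1, HY1 in HL, HM. unfold apt in HL, HM, HX1, HY1; simpl in HL, HM, HX1, HY1 |- *.
  set (k := kk zeta) in *. set (d := dd zeta) in *. set (s := sa eps zeta) in *.
  assert (Hkd : d < k) by nra.
  split; [exact HN0|]. split.
  - destruct (Rlt_or_le u2 u1) as [|Hle]; [assumption|exfalso].
    assert (HC : C1 (fun t => X t + - Y t)) by (apply C1_plus; [exact HX| apply C1_opp; exact HY]).
    destruct (C1_IVT _ 0 1 HC ltac:(lra)) as [z [Hz01 Hz0]].
    { rewrite HX0, HY0, HX1, HY1. assert (0 < s * k - s * d) by nra. nra. }
    destruct (Rle_lt_or_eq_dec z 1 ltac:(lra)) as [Hz1|Hz1].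
    + specialize (HPi z 1 ltac:(lra) Hz1 ltac:(lra)).
      rewrite HX1, HY1 in HPi.
      assert (X z = Y z) by lra.
      assert (0 < s*k - s*d) by nra. assert (0 < s*k + s*d) by nra.
      assert (0 < (s*k)^2 - (s*d)^2) by (replace ((s*k)^2 - (s*d)^2) with ((s*k - s*d)*(s*k+s*d)) by ring; apply Rmult_lt_0_compat; lra).
      rewrite H in HPi. nra.
    + subst z. rewrite HX1, HY1 in Hz0. nra.
  - assert (E : 2 * (s * k) * (s * d) - k * ((s * k) ^ 2 - (s * d) ^ 2) = 0).
    { pose proof (L_apt eps zeta Hz) as HL0. simpl in HL0. exact HL0. }
    split. nra.
    assert (0 < s*k - s*d) by nra. assert (0 < s*k + s*d) by nra.
    assert (0 < (s*k)^2 - (s*d)^2) by (replace ((s*k)^2 - (s*d)^2) with ((s*k - s*d)*(s*k+s*d)) by ring; apply Rmult_lt_0_compat; lra).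
    assert (0 < s * k * (s * d)) by (apply Rmult_lt_0_compat; nra).
    assert (0 < k * ((s*k)^2 - (s*d)^2)) by nra.
    nra.
Qed.


Lemma C1_of_deriv f f' : (forall t, is_derive f t (f' t)) -> (forall t, ex_derive f' t) -> C1 f.
Proof.
  intros Hd He t. split.
  - eexists; apply Hd.
  - apply continuous_ext with (f := f').
    + intros x. symmetry. apply is_derive_unique, Hd.
    + apply (ex_derive_continuous (K:=R_AbsRing) (V:=R_NormedModule)). apply He.
Qed.

Lemma lift_alg P Q : 0 < sqrt (P^2 + Q^2) - Q ->
  let S := sqrt (P^2 + Q^2) in let A := sqrt (S - Q) in let B := P / A in
  ((A+B)/2)^2 - ((B-A)/2)^2 = P /\ 2*((A+B)/2)*((B-A)/2) = Q /\
  ((A+B)/2)^2 + ((B-A)/2)^2 = S /\ 0 < A.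
Proof.
  intros H S A B.
  assert (HA : 0 < A) by (apply sqrt_lt_R0; exact H).
  assert (HAA : A * A = S - Q) by (apply sqrt_sqrt; unfold S; lra).
  assert (HSS : S * S = P^2 + Q^2) by (apply sqrt_sqrt; apply Rplus_le_le_0_compat; apply pow2_ge_0).
  assert (HAB : A * B = P) by (unfold B; field; lra).
  assert (HBB : B * B * (A * A) = P * P) by (rewrite <- HAB; ring).
  assert (HB2 : B * B = S + Q).
  { assert (0 < A * A) by (apply Rmult_lt_0_compat; lra).
    apply Rmult_eq_reg_r with (A * A); [|lra]. rewrite HBB, HAA.
    assert (E : P * P = S * S - Q * Q) by (rewrite HSS; ring). rewrite E. ring. }
  split; [|split; [|split]].
  - transitivity (A * B); [field|exact HAB].
  - transitivity ((B * B - A * A) / 2); [field|]. rewrite HB2, HAA. field.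
  - transitivity ((B * B + A * A) / 2); [field|]. rewrite HB2, HAA. field.
  - exact HA.
Qed.

Lemma pos_of_lift x y : 0 < sqrt (x^2 + y^2) - y -> 0 < x^2 + y^2.
Proof.
  intros H. destruct (Rlt_or_le 0 (x^2 + y^2)) as [|Hle]; [assumption|].
  assert (E : x^2 + y^2 = 0) by (pose proof (pow2_ge_0 x); pose proof (pow2_ge_0 y); lra).
  assert (y = 0) by (pose proof (pow2_ge_0 x); pose proof (pow2_ge_0 y); nra).
  rewrite E, sqrt_0 in H. lra.
Qed.

Lemma endpoint_alg x y : y < x ->
  let P := x^2 - y^2 in let Q := 2*x*y in
  let A := sqrt (sqrt (P^2 + Q^2) - Q) in
  (A + P / A) / 2 = x /\ (P / A - A) / 2 = y.
Proof.
  intros H P Q A.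
  assert (E1 : P^2 + Q^2 = (x^2 + y^2)^2) by (unfold P, Q; ring).
  assert (E2 : sqrt (P^2 + Q^2) = x^2 + y^2).
  { rewrite E1. apply sqrt_pow2. nra. }
  assert (E3 : A = x - y).
  { unfold A. rewrite E2. replace (x^2 + y^2 - Q) with ((x - y)^2) by (unfold Q; ring).
    apply sqrt_pow2. lra. }
  rewrite E3. unfold P. split; field; lra.
Qed.

Lemma lift_curve eps zeta (Pp Qp dP dQ : R -> R) (u q : pt) :
  0 < eps -> 1 < zeta ->
  (forall t, is_derive Pp t (dP t)) -> (forall t, is_derive Qp t (dQ t)) ->
  (forall t, ex_derive dP t) -> (forall t, ex_derive dQ t) ->
  (forall t, 0 < sqrt (Pp t ^ 2 + Qp t ^ 2) - Qp t) ->
  (forall t, 0 <= t <= 1 -> Pp t ^ 2 + Qp t ^ 2 < (eps ^ 2) ^ 2) ->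
  (forall t, 0 <= t <= 1 -> 0 < dQ t - kk zeta * dP t /\ 0 < - dQ t - kk zeta * dP t) ->
  Pp 0 = fst u ^ 2 - snd u ^ 2 -> Qp 0 = 2 * fst u * snd u -> snd u < fst u ->
  Pp 1 = fst q ^ 2 - snd q ^ 2 -> Qp 1 = 2 * fst q * snd q -> snd q < fst q ->
  chron eps zeta u q.
Proof.
  intros He Hz HdP HdQ HeP HeQ Hcut Hbox Hcone HP0 HQ0 Hu HP1 HQ1 Hq.
  destruct (consts zeta Hz) as [Hk [Hkk [Hd Hdd]]].
  set (Sf := fun t => sqrt (Pp t ^ 2 + Qp t ^ 2)).
  set (Af := fun t => sqrt (Sf t - Qp t)).
  set (X := fun t => (Af t + Pp t / Af t) / 2).
  set (Y := fun t => (Pp t / Af t - Af t) / 2).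
  assert (HAp : forall t, 0 < Af t) by (intros t; apply sqrt_lt_R0; apply Hcut).
  assert (CP : C1 Pp) by (apply C1_of_deriv with dP; assumption).
  assert (CQ : C1 Qp) by (apply C1_of_deriv with dQ; assumption).
  assert (CS : C1 Sf).
  { apply C1_sqrt. apply C1_plus; apply C1_pow; assumption.
    intros t. apply (pos_of_lift (Pp t) (Qp t)). apply Hcut. }
  assert (CA : C1 Af).
  { apply C1_sqrt. apply C1_ext with (fun t => Sf t + - Qp t).
    apply C1_plus; [assumption| apply C1_opp; assumption]. intros; reflexivity.
    intros t. apply Hcut. }
  assert (CB : C1 (fun t => Pp t / Af t)).
  { apply C1_mult. assumption. apply C1_inv. assumption. intros t. specialize (HAp t). lra. }
  assert (CX : C1 X).
  { apply C1_ext with (fun t => (Af t + Pp t / Af t) * (/ 2)).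
    apply C1_mult. apply C1_plus; assumption. apply C1_const. intros; reflexivity. }
  assert (CY : C1 Y).
  { apply C1_ext with (fun t => (Pp t / Af t + - Af t) * (/ 2)).
    apply C1_mult. apply C1_plus. assumption. apply C1_opp; assumption. apply C1_const.
    intros; reflexivity. }
  assert (Halg : forall t, X t ^ 2 - Y t ^ 2 = Pp t /\ 2 * X t * Y t = Qp t /\
                  X t ^ 2 + Y t ^ 2 = Sf t).
  { intros t. destruct (lift_alg (Pp t) (Qp t) (Hcut t)) as [A1 [A2 [A3 _]]].
    split; [|split]; assumption. }
  exists X, Y. split; [exact CX|]. split; [exact CY|].
  split.
  { destruct (endpoint_alg (fst u) (snd u) Hu) as [E1 E2].
    unfold X, Y, Af, Sf. rewrite HP0, HQ0, E1, E2. destruct u; reflexivity. }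
  split.
  { destruct (endpoint_alg (fst q) (snd q) Hq) as [E1 E2].
    unfold X, Y, Af, Sf. rewrite HP1, HQ1, E1, E2. destruct q; reflexivity. }
  intros t Ht.
  assert (DX : ex_derive X t) by apply CX.
  assert (DY : ex_derive Y t) by apply CY.
  assert (D1 : 2 * (X t * Derive X t - Y t * Derive Y t) = dP t).
  { assert (H1 : is_derive (fun t => X t ^ 2 - Y t ^ 2) t (2 * (X t * Derive X t - Y t * Derive Y t))).
    { auto_derive. tauto. change (Derive (fun x : R => X x) t) with (Derive X t);
      change (Derive (fun x : R => Y x) t) with (Derive Y t); ring. }
    apply is_derive_ext with (g := Pp) in H1; [|intros s; apply Halg].
    apply is_derive_unique in H1. rewrite <- H1. apply is_derive_unique, HdP. }
  assert (D2 : 2 * (X t * Derive Y t + Y t * Derive X t) = dQ t).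
  { assert (H1 : is_derive (fun t => 2 * X t * Y t) t (2 * (X t * Derive Y t + Y t * Derive X t))).
    { auto_derive. tauto. change (Derive (fun x : R => X x) t) with (Derive X t);
      change (Derive (fun x : R => Y x) t) with (Derive Y t); ring. }
    apply is_derive_ext with (g := Qp) in H1; [|intros s; apply Halg].
    apply is_derive_unique in H1. rewrite <- H1. apply is_derive_unique, HdQ. }
  destruct (Halg t) as [_ [_ HS]].
  split.
  - unfold inN. cbn [fst snd]. rewrite HS. unfold Sf. split.
    + apply sqrt_lt_R0. apply (pos_of_lift (Pp t) (Qp t)). apply Hcut.
    + rewrite <- (sqrt_pow2 (eps ^ 2)) by (apply pow2_ge_0).
      apply sqrt_lt_1_alt. split. apply Rplus_le_le_0_compat; apply pow2_ge_0. apply Hbox; exact Ht.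
  - unfold fut_timelike. rewrite gmet_eq, df_eq. rewrite D1, D2.
    destruct (Hcone t Ht) as [C1' C2'].
    split.
    + rewrite <- Hkk.
      assert (0 < (dQ t - kk zeta * dP t) * (- dQ t - kk zeta * dP t)) by (apply Rmult_lt_0_compat; lra).
      nra.
    + assert (0 < kk zeta * dP t * (-1)) by lra. nra.
Qed.


Definition comb (m : nat) (t A0 A1 A2 : R) :=
  (1-t)^(S(2*m))*A0 + (1 - (1-t)^(S(2*m)) - t^(S(2*m)))*A1 + t^(S(2*m))*A2.
Definition dcomb (m : nat) (t A0 A1 A2 : R) :=
  INR (S(2*m)) * ((1-t)^(2*m)*(A1 - A0) + t^(2*m)*(A2 - A1)).

Lemma comb_deriv m A0 A1 A2 t : is_derive (fun t => comb m t A0 A1 A2) t (dcomb m t A0 A1 A2).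
Proof. unfold comb, dcomb. auto_derive. trivial.
  change (match (m + (m + 0))%nat with 0%nat => 1 | S _ => INR (m + (m + 0)) + 1 end) with (INR (S (2*m))).
  change (m + (m + 0))%nat with (2*m)%nat. unfold Rminus. ring. Qed.

Lemma dcomb_ex m A0 A1 A2 t : ex_derive (fun t => dcomb m t A0 A1 A2) t.
Proof. unfold dcomb. auto_derive. trivial. Qed.

Lemma even_pow_nonneg x m : 0 <= x^(2*m).
Proof. rewrite pow_mult. apply pow_le. apply pow2_ge_0. Qed.

Lemma dcomb_pos m A0 A1 A2 t : A0 < A1 -> A1 < A2 -> 0 < dcomb m t A0 A1 A2.
Proof.
  intros H1 H2. unfold dcomb. apply Rmult_lt_0_compat.
  - apply lt_0_INR. lia.
  - pose proof (even_pow_nonneg (1-t) m). pose proof (even_pow_nonneg t m).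
    destruct (Req_dec t 0) as [E|E].
    + subst t. replace (1-0) with 1 by ring. rewrite pow1.
      assert (0 <= 0^(2*m) * (A2 - A1)) by (apply Rmult_le_pos; lra). nra.
    + assert (0 < t^(2*m)) by (rewrite pow_mult; apply pow_lt; nra).
      assert (0 <= (1-t)^(2*m) * (A1 - A0)) by (apply Rmult_le_pos; lra).
      assert (0 < t^(2*m) * (A2 - A1)) by (apply Rmult_lt_0_compat; lra). lra.
Qed.

Lemma comb_incr m A0 A1 A2 t1 t2 : A0 < A1 -> A1 < A2 -> t1 < t2 ->
  comb m t1 A0 A1 A2 < comb m t2 A0 A1 A2.
Proof.
  intros H1 H2 H12.
  apply (incr_deriv (fun t => comb m t A0 A1 A2) (fun t => dcomb m t A0 A1 A2)); auto.
  intros; apply comb_deriv. intros; apply dcomb_pos; auto.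
Qed.

Lemma comb_0 m A0 A1 A2 : comb m 0 A0 A1 A2 = A0.
Proof. unfold comb. replace (1-0) with 1 by ring. rewrite pow1, pow_i by lia. ring. Qed.

Lemma comb_1 m A0 A1 A2 : comb m 1 A0 A1 A2 = A2.
Proof. unfold comb. replace (1-1) with 0 by ring. rewrite pow1, pow_i by lia. ring. Qed.

Lemma pow_le_self x n : 0 <= x <= 1 -> x^(S n) <= x.
Proof.
  intros H. simpl. assert (x^n <= 1) by (rewrite <- (pow1 n); apply pow_incr; lra).
  assert (0 <= x^n) by (apply pow_le; lra). nra.
Qed.

Lemma weights m t : 0 <= t <= 1 ->
  0 <= (1-t)^(S(2*m)) /\ 0 <= t^(S(2*m)) /\ 0 <= 1 - (1-t)^(S(2*m)) - t^(S(2*m)).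
Proof.
  intros H. pose proof (pow_le_self (1-t) (2*m) ltac:(lra)).
  pose proof (pow_le_self t (2*m) ltac:(lra)).
  split; [apply pow_le; lra|]. split; [apply pow_le; lra|]. lra.
Qed.

Lemma wavg3 a0 a1 a2 e0 e1 e2 E : 0 <= a0 -> 0 <= a1 -> 0 <= a2 -> a0 + a1 + a2 = 1 ->
  e0 < E -> e1 < E -> e2 < E -> a0*e0 + a1*e1 + a2*e2 < E.
Proof.
  intros. set (mx := Rmax e0 (Rmax e1 e2)).
  assert (e0 <= mx) by apply Rmax_l.
  assert (e1 <= mx) by (unfold mx; eapply Rle_trans; [apply Rmax_l|apply Rmax_r]).
  assert (e2 <= mx) by (unfold mx; eapply Rle_trans; [apply Rmax_r|apply Rmax_r]).
  assert (mx < E) by (unfold mx; repeat apply Rmax_lub_lt; lra).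
  assert (a0*e0 <= a0*mx) by (apply Rmult_le_compat_l; lra).
  assert (a1*e1 <= a1*mx) by (apply Rmult_le_compat_l; lra).
  assert (a2*e2 <= a2*mx) by (apply Rmult_le_compat_l; lra).
  nra.
Qed.

Lemma jensen3 a0 a1 a2 x0 y0 x1 y1 x2 y2 : 0 <= a0 -> 0 <= a1 -> 0 <= a2 -> a0 + a1 + a2 = 1 ->
  (a0*x0+a1*x1+a2*x2)^2 + (a0*y0+a1*y1+a2*y2)^2 <=
  a0*(x0^2+y0^2) + a1*(x1^2+y1^2) + a2*(x2^2+y2^2).
Proof.
  intros H0 H1 H2 Hs.
  assert (E : a0*(x0^2+y0^2) + a1*(x1^2+y1^2) + a2*(x2^2+y2^2)
    - ((a0*x0+a1*x1+a2*x2)^2 + (a0*y0+a1*y1+a2*y2)^2)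
    = a0*a1*((x0-x1)^2+(y0-y1)^2) + a0*a2*((x0-x2)^2+(y0-y2)^2) + a1*a2*((x1-x2)^2+(y1-y2)^2)).
  { replace a1 with (1 - a0 - a2) by lra. ring. }
  assert (0 <= a0*a1*((x0-x1)^2+(y0-y1)^2)) by
    (apply Rmult_le_pos; [apply Rmult_le_pos; lra| apply Rplus_le_le_0_compat; apply pow2_ge_0]).
  assert (0 <= a0*a2*((x0-x2)^2+(y0-y2)^2)) by
    (apply Rmult_le_pos; [apply Rmult_le_pos; lra| apply Rplus_le_le_0_compat; apply pow2_ge_0]).
  assert (0 <= a1*a2*((x1-x2)^2+(y1-y2)^2)) by
    (apply Rmult_le_pos; [apply Rmult_le_pos; lra| apply Rplus_le_le_0_compat; apply pow2_ge_0]).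
  lra.
Qed.

Lemma cut_from_LM k P Q : 0 < k -> (Q - k*P < 0 \/ 0 < -Q - k*P) -> 0 < sqrt (P^2 + Q^2) - Q.
Proof.
  intros Hk H.
  destruct (Rlt_or_le Q 0) as [HQ|HQ].
  - pose proof (sqrt_pos (P^2+Q^2)). lra.
  - assert (HP : 0 < P^2).
    { destruct H as [H|H].
      - assert (0 < k*P) by lra. assert (0 < P) by nra. nra.
      - assert (k*P < 0) by lra. assert (P < 0) by nra. nra. }
    rewrite <- (sqrt_pow2 Q HQ) at 2.
    assert (sqrt (Q^2) < sqrt (P^2+Q^2)).
    { apply sqrt_lt_1_alt. split. apply pow2_ge_0. lra. }
    lra.
Qed.


Lemma comb_lc m t a b A0 A1 A2 B0 B1 B2 :
  a * comb m t A0 A1 A2 + b * comb m t B0 B1 B2 =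
  comb m t (a*A0+b*B0) (a*A1+b*B1) (a*A2+b*B2).
Proof. unfold comb. ring. Qed.

Lemma dcomb_lc m t a b A0 A1 A2 B0 B1 B2 :
  a * dcomb m t A0 A1 A2 + b * dcomb m t B0 B1 B2 =
  dcomb m t (a*A0+b*B0) (a*A1+b*B1) (a*A2+b*B2).
Proof. unfold dcomb. ring. Qed.

Lemma reach eps zeta (u q : pt) : 0 < eps -> 1 < zeta -> inN eps u -> snd u < fst u ->
  2 * fst u * snd u - kk zeta * (fst u ^ 2 - snd u ^ 2) < 0 ->
  - 2 * fst u * snd u - kk zeta * (fst u ^ 2 - snd u ^ 2) < 0 ->
  inN eps q -> snd q < fst q ->
  0 < 2 * fst q * snd q - kk zeta * (fst q ^ 2 - snd q ^ 2) ->
  0 < - 2 * fst q * snd q - kk zeta * (fst q ^ 2 - snd q ^ 2) ->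
  chron eps zeta u q.
Proof.
  intros He Hz HNu Hu HLu HMu HNq Hq HLq HMq.
  destruct (consts zeta Hz) as [Hk [Hkk [Hd Hdd]]].
  destruct u as [u1 u2], q as [q1 q2]; simpl in *.
  set (k := kk zeta) in *.
  set (Pu := u1^2 - u2^2). set (Qu := 2*u1*u2).
  set (Pq := q1^2 - q2^2). set (Qq := 2*q1*q2).
  set (Lu := Qu - k*Pu). set (Mu := -Qu - k*Pu).
  set (Lq := Qq - k*Pq). set (Mq := -Qq - k*Pq).
  assert (HLu' : Lu < 0) by (unfold Lu, Qu, Pu; lra).
  assert (HMu' : Mu < 0) by (unfold Mu, Qu, Pu; lra).
  assert (HLq' : 0 < Lq) by (unfold Lq, Qq, Pq; lra).
  assert (HMq' : 0 < Mq) by (unfold Mq, Qq, Pq; lra).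
  set (LW := Lu / zeta). set (PW := - Lu / (2 * k * zeta)). set (QW := Lu / (2 * zeta)).
  assert (HLW : QW - k * PW = LW) by (unfold QW, PW, LW; field; lra).
  assert (HMW : - QW - k * PW = 0) by (unfold QW, PW; field; lra).
  assert (HLW1 : Lu < LW).
  { unfold LW. apply Rmult_lt_reg_r with zeta; [lra|]. unfold Rdiv.
    rewrite Rmult_assoc, Rinv_l by lra. nra. }
  assert (HLW2 : LW < 0) by (unfold LW; unfold Rdiv; assert (0 < / zeta) by (apply Rinv_0_lt_compat; lra); nra).
  set (tau := - LW / (Lq - LW)).
  assert (Htau : 0 < tau) by (unfold tau; apply Rdiv_lt_0_compat; lra).
  assert (Htau2 : tau * (Lq - LW) = - LW) by (unfold tau; field; lra).
  set (bound := tau^2 * Mq / (- Mu)).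
  assert (Hbound : 0 < bound).
  { unfold bound. apply Rdiv_lt_0_compat; [|lra]. apply Rmult_lt_0_compat; [nra|lra]. }
  destruct (pow_lt_1_zero (1/4) ltac:(rewrite Rabs_right; lra) bound Hbound) as [N HN].
  set (m := N).
  assert (Hsm : (1/4)^(S(2*m)) < bound).
  { specialize (HN (S (2*m)) ltac:(unfold m; lia)). rewrite Rabs_right in HN; [exact HN|].
    apply Rle_ge, pow_le; lra. }
  set (n := S (2*m)).
  assert (HLp : forall t, comb m t Qu QW Qq - k * comb m t Pu PW Pq = comb m t Lu LW Lq).
  { intros t. replace (comb m t Qu QW Qq - k * comb m t Pu PW Pq)
      with (1 * comb m t Qu QW Qq + (-k) * comb m t Pu PW Pq) by ring.
    rewrite comb_lc. rewrite <- HLW. unfold Lu, Lq. f_equal; ring. }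
  assert (HMp : forall t, - comb m t Qu QW Qq - k * comb m t Pu PW Pq = comb m t Mu 0 Mq).
  { intros t. replace (- comb m t Qu QW Qq - k * comb m t Pu PW Pq)
      with ((-1) * comb m t Qu QW Qq + (-k) * comb m t Pu PW Pq) by ring.
    rewrite comb_lc. rewrite <- HMW. unfold Mu, Mq. f_equal; ring. }
  assert (HLM : forall t, comb m t Lu LW Lq < 0 \/ 0 < comb m t Mu 0 Mq).
  { intros t.
    destruct (Rlt_or_le t 0) as [Ht0|Ht0].
    { left. pose proof (comb_incr m Lu LW Lq t 0 HLW1 ltac:(lra) Ht0). rewrite comb_0 in H. lra. }
    destruct (Rlt_or_le 1 t) as [Ht1|Ht1].
    { right. pose proof (comb_incr m Mu 0 Mq 1 t HMu' HMq' Ht1). rewrite comb_1 in H. lra. }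
    destruct (Rlt_or_le 0 (comb m t Mu 0 Mq)) as [|HM0]; [right; assumption|left].
    destruct (weights m t ltac:(lra)) as [Ha0 [Ha2 Ha1]].
    unfold comb in HM0 |- *. fold n in HM0, Ha0, Ha2, Ha1 |- *.
    set (a0 := (1-t)^n) in *. set (a2 := t^n) in *.
    assert (Hprod : a0 * a2 <= (1/4)^n).
    { unfold a0, a2. rewrite <- Rpow_mult_distr. apply pow_incr. split.
      apply Rmult_le_pos; lra. pose proof (pow2_ge_0 (t - 1/2)). nra. }
    assert (H1 : a2 * Mq <= a0 * (- Mu)) by lra.
    assert (H2 : a2 * a2 * Mq <= a2 * a0 * (- Mu)).
    { replace (a2 * a2 * Mq) with (a2 * (a2 * Mq)) by ring.
      replace (a2 * a0 * (- Mu)) with (a2 * (a0 * (- Mu))) by ring.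
      apply Rmult_le_compat_l; lra. }
    assert (H3 : a2 * a0 * (- Mu) <= (1/4)^n * (- Mu)).
    { apply Rmult_le_compat_r; lra. }
    assert (H4 : (1/4)^n * (- Mu) < tau^2 * Mq).
    { replace (tau^2 * Mq) with (bound * (- Mu)) by (unfold bound; field; lra).
      apply Rmult_lt_compat_r; [lra| exact Hsm]. }
    assert (H5 : a2 * a2 < tau * tau).
    { apply Rmult_lt_reg_r with Mq; [lra|]. nra. }
    assert (H6 : a2 < tau) by nra.
    assert (a0 * Lu <= a0 * LW) by (apply Rmult_le_compat_l; lra).
    assert (a2 * (Lq - LW) < tau * (Lq - LW)) by (apply Rmult_lt_compat_r; lra).
    nra. }
  assert (HU : Pu^2 + Qu^2 < (eps^2)^2).
  { unfold Pu, Qu. replace ((u1^2-u2^2)^2 + (2*u1*u2)^2) with ((u1^2+u2^2)^2) by ring.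
    unfold inN in HNu; simpl in HNu. destruct HNu. nra. }
  assert (HV : Pq^2 + Qq^2 < (eps^2)^2).
  { unfold Pq, Qq. replace ((q1^2-q2^2)^2 + (2*q1*q2)^2) with ((q1^2+q2^2)^2) by ring.
    unfold inN in HNq; simpl in HNq. destruct HNq. nra. }
  assert (HW : PW^2 + QW^2 < (eps^2)^2).
  { assert (E1 : PW^2 + QW^2 = Lu^2 * (1 + k*k) / (4*k*k*zeta*zeta)) by (unfold PW, QW; field; lra).
    rewrite Hkk in E1. replace (1 + (zeta - 1)) with zeta in E1 by ring.
    assert (E2 : 2*k*Pu = -(Lu+Mu)) by (unfold Lu, Mu; ring).
    assert (E3 : Lu^2 * zeta / (4*k*k*zeta*zeta) = Lu^2 / (4*k*k*zeta)) by (field; lra).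
    rewrite E3 in E1.
    assert (Hkz : 0 < 4*k*k*zeta) by (repeat apply Rmult_lt_0_compat; lra).
    assert (E4 : Lu^2 <= 4*k*k*zeta*Pu^2).
    { assert (4*k*k*Pu^2 = (Lu+Mu)^2) by (replace (Lu+Mu) with (-(2*k*Pu)) by lra; ring).
      assert (Lu^2 <= (Lu+Mu)^2) by nra.
      assert (0 <= 4*k*k*Pu^2) by (rewrite H; apply pow2_ge_0).
      nra. }
    assert (PW^2 + QW^2 <= Pu^2).
    { rewrite E1. apply Rmult_le_reg_r with (4*k*k*zeta); [exact Hkz|].
      unfold Rdiv. rewrite Rmult_assoc, Rinv_l by lra. lra. }
    pose proof (pow2_ge_0 Qu). lra. }
  apply (lift_curve eps zeta (fun t => comb m t Pu PW Pq) (fun t => comb m t Qu QW Qq)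
           (fun t => dcomb m t Pu PW Pq) (fun t => dcomb m t Qu QW Qq) (u1, u2) (q1, q2));
    simpl; auto.
  - intros t. apply comb_deriv.
  - intros t. apply comb_deriv.
  - intros t. apply dcomb_ex.
  - intros t. apply dcomb_ex.
  - intros t. apply cut_from_LM with k; [exact Hk|]. rewrite HLp, HMp. apply HLM.
  - intros t Ht. destruct (weights m t Ht) as [Ha0 [Ha2 Ha1]].
    unfold comb.
    eapply Rle_lt_trans; [apply jensen3; [exact Ha0|exact Ha1|exact Ha2|ring]|].
    apply wavg3; try assumption; try ring.
  - intros t Ht. change (kk zeta) with k. split.
    + replace (dcomb m t Qu QW Qq - k * dcomb m t Pu PW Pq)
        with (1 * dcomb m t Qu QW Qq + (-k) * dcomb m t Pu PW Pq) by ring.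
      rewrite dcomb_lc. apply dcomb_pos.
      * replace (1 * Qu + - k * Pu) with Lu by (unfold Lu; ring).
        replace (1 * QW + - k * PW) with LW by lra. exact HLW1.
      * replace (1 * QW + - k * PW) with LW by lra.
        replace (1 * Qq + - k * Pq) with Lq by (unfold Lq; ring). lra.
    + replace (- dcomb m t Qu QW Qq - k * dcomb m t Pu PW Pq)
        with ((-1) * dcomb m t Qu QW Qq + (-k) * dcomb m t Pu PW Pq) by ring.
      rewrite dcomb_lc. apply dcomb_pos.
      * replace (-1 * Qu + - k * Pu) with Mu by (unfold Mu; ring).
        replace (-1 * QW + - k * PW) with 0 by lra. exact HMu'.
      * replace (-1 * QW + - k * PW) with 0 by lra.
        replace (-1 * Qq + - k * Pq) with Mq by (unfold Mq; ring). lra.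
  - unfold Pu. rewrite comb_0. reflexivity.
  - rewrite comb_0. reflexivity.
  - rewrite comb_1. reflexivity.
  - rewrite comb_1. reflexivity.
Qed.


Lemma sq_bound a r : a^2 < r^2 -> 0 < r -> -r < a < r.
Proof.
  intros H Hr. split.
  - destruct (Rlt_or_le (-r) a) as [|Hle]; [assumption|]. exfalso. nra.
  - destruct (Rlt_or_le a r) as [|Hle]; [assumption|]. exfalso. nra.
Qed.

Lemma b_up eps zeta : 0 < eps -> 1 < zeta ->
  up eps zeta (Ipast eps zeta (apt eps zeta)) (bpt eps).
Proof.
  intros He Hz. destruct (consts zeta Hz) as [Hk [Hkk [Hd Hdd]]].
  set (k := kk zeta) in *. set (beta := eps / 2).
  assert (Hb : 0 < beta) by (unfold beta; lra).
  set (r := beta * k / (5 * (1 + k))).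
  assert (Hr : 0 < r) by (unfold r; apply Rdiv_lt_0_compat; nra).
  assert (Hr1 : r * (5 * (1 + k)) = beta * k) by (unfold r; field; lra).
  assert (Hr2 : r <= beta / 5) by nra.
  assert (Hr3 : r <= k * beta / 5) by nra.
  unfold up, interior2. exists r. split; [exact Hr|].
  intros [x y] Hq. unfold bpt in Hq. simpl in Hq. fold beta in Hq.
  assert (Hx : x^2 < r^2) by (pose proof (pow2_ge_0 (y - - beta)); lra).
  assert (Hy : (y + beta)^2 < r^2) by (pose proof (pow2_ge_0 (x - 0)); replace (y + beta) with (y - - beta) by ring; lra).
  apply sq_bound in Hx; [|exact Hr]. apply sq_bound in Hy; [|exact Hr].
  assert (Hq1 : y < x) by lra.
  assert (Hyn : y < 0) by lra.
  assert (HN : inN eps (x, y)).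
  { unfold inN; simpl. split. nra.
    assert (x * x < beta * beta / 25) by nra.
    assert (y * y < 36 * beta * beta / 25) by nra.
    unfold beta in *. nra. }
  assert (Hyy : 16 * beta * beta / 25 < y * y) by nra.
  assert (Hxx : k * (x * x) <= k * (beta * beta) / 25).
  { assert (x * x <= beta * beta / 25) by nra. nra. }
  assert (Hxy1 : - (x * y) < r * (6 * beta / 5)) by nra.
  assert (Hxy2 : x * y < r * (6 * beta / 5)) by nra.
  split; [exact HN|].
  intros u Hu. unfold Ipast in Hu.
  destruct (past_props eps zeta u He Hz Hu) as [HNu [Hu1 [HLu HMu]]].
  apply reach; auto; simpl; fold k.
  - assert (k * (y*y) >= k * (16 * beta * beta / 25)) by nra. nra.
  - assert (k * (y*y) >= k * (16 * beta * beta / 25)) by nra. nra.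
Qed.

Theorem lemma2 (eps zeta : R) (Heps : 0 < eps) (Hzeta : 1 < zeta) :
  ~ causally_continuous eps zeta.
Proof.
  intros HC.
  destruct (HC (apt eps zeta) (apt_in eps zeta Heps Hzeta)) as [H1 _].
  apply (not_fut eps zeta Heps Hzeta).
  apply (proj2 (H1 (bpt eps))).
  apply b_up; assumption.
Qed.
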